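(* Let $n\geq 3$ and let $C_n^*$ be the complex described in the context. Let $D$ be an $S^3$-knotlike chain complex over $R$, and let $f\colon C_n^*\to D$ and $g\colon D\to C_n^*$ be $R$-linear chain maps. Then the image of $g f(\alpha_n^* )$ is a boundary in the complex $C_n^*\otimes_R\mathbb{F}[\mathcal{U}]/(\mathcal{U}^{n-1})$, where $\mathcal{V}$ acts on $\mathbb{F}[\mathcal{U}]/(\mathcal{U}^{n-1})$ as $1$.
   Context: Let $\mathbb{F}=\mathbb{Z}/2$ and $R=\mathbb{F}[\mathcal{U},\mathcal{V}]$. A chain complex $D$ over $R$ is $S^3$-knotlike if $H_*(D\otimes_R\mathbb{F}[\mathcal{U}])\cong\mathbb{F}[\mathcal{U}]$ as $\mathbb{F}[\mathcal{U}]$-modules, where $\mathcal{V}$ acts on $\mathbb{F}[\mathcal{U}]$ as $1$. For $n\geq 3$, $C_n^*$ is the free $R$-module with basis $\alpha^*_s$ ($1\leq s\leq 2n-1$); $\widetilde{\alpha}^*_s$ ($1\leq s\leq n-2$ and $n+1\leq s\leq 2n-2$); $b^{*,(s)}_{n-1}$ ($1\leq s\leq n-2$); $b^{*,(s)}_{n}$ ($1\leq s\leq 2n-2$); $b^{*,(s)}_{n+1}$ ($n+1\leq s\leq 2n-2$), with $R$-linear differential $\partial$ given by $\partial\alpha^*_s=0$, $\partial\widetilde{\alpha}^*_s=0$, and $\partial b^{*,(s)}_{n-1}=\mathcal{U}^{n(n-1)/2}\mathcal{V}^{n(n-1)/2}\alpha^*_s+\mathcal{V}^{n-s-1}\widetilde{\alpha}^*_s$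 for $1\leq s\leq n-2$; $\partial b^{*,(s)}_{n}=\mathcal{U}^{n(n+1)/2-s}\mathcal{V}^{n(n+1)/2}\alpha^*_{s+1}+\mathcal{U}^{n}\widetilde{\alpha}^*_s$ for $1\leq s\leq n-2$; $\partial b^{*,(s)}_{n}=\mathcal{U}^{n(n+1)/2}\mathcal{V}^{n(n-1)/2-n+s+1}\alpha^*_s+\mathcal{U}^{n(n+1)/2-s}\mathcal{V}^{n(n+1)/2}\alpha^*_{s+1}$ for $n-1\leq s\leq n$; $\partial b^{*,(s)}_{n}=\mathcal{U}^{n(n+1)/2}\mathcal{V}^{n(n-1)/2-n+s+1}\alpha^*_s+\mathcal{V}^{n}\widetilde{\alpha}^*_s$ for $n+1\leq s\leq 2n-2$; $\partial b^{*,(s)}_{n+1}=\mathcal{U}^{n(n-1)/2}\mathcal{V}^{n(n-1)/2}\alpha^*_{s+1}+\mathcal{U}^{s-n}\widetilde{\alpha}^*_s$ for $n+1\leq s\leq 2n-2$. *)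

(* Defs.v *)
From HB Require Import structures.
From mathcomp Require Import all_boot all_order all_algebra.
Unset Printing Implicit Defensive.
Import GRing.Theory.
Local Open Scope ring_scope.

(** The ring R = F[U,V], F = Z/2, realised as {poly {poly 'F_2}}:
    the inner variable is U, the outer variable is V. *)
Definition R : comNzRingType := {poly {poly 'F_2}}.
Definition Uv : R := ('X : {poly 'F_2})%:P.
Definition Vv : R := 'X.
(** F[U] = {poly 'F_2}; the action of R on F[U] where V acts as 1 is
    r . p = r.[1] * p  (evaluation of the outer variable V at 1). *)
Definition setV1 (r : R) : {poly 'F_2} := r.[1].

Section Cx.
Variable (D : lmodType R) (dD : D -> D).

(** x is a cycle in D (x)_R F[U]  =  D/(V-1)D *)
Definition cycV1 (x : D) : Prop := exists y : D, dD x = (Vv - 1) *: y.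
(** x is a boundary in D (x)_R F[U] *)
Definition bndV1 (x : D) : Prop := exists y z : D, x = dD y + (Vv - 1) *: z.

(** D is S^3-knotlike: H_*(D (x)_R F[U]) ~= F[U] as F[U]-modules.
    Spelled out: a map phi : F[U] -> (cycles of D (x)_R F[U]) whose
    induced map F[U] -> H_* is R-linear (V acting as 1 on F[U]),
    injective and surjective. *)
Definition S3_knotlike : Prop :=
  exists phi : {poly 'F_2} -> D,
    [/\ forall p, cycV1 (phi p),
        forall (r : R) p q,
          bndV1 (phi (setV1 r * p + q) - (r *: phi p + phi q)),
        forall p, bndV1 (phi p) -> p = 0
      & forall x, cycV1 x -> exists p, bndV1 (x - phi p)].
End Cx.

Inductive gkind := KA | KAt | KB1 | KB2 | KB3.
(* KA = alpha^*_s, KAt = tilde-alpha^*_s, KB1 = b^{*,(s)}_{n-1},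
   KB2 = b^{*,(s)}_n, KB3 = b^{*,(s)}_{n+1} *)

Definition gkind_code (k : gkind) : 'I_5 :=
  match k with KA => inord 0 | KAt => inord 1 | KB1 => inord 2
             | KB2 => inord 3 | KB3 => inord 4 end.
Definition gkind_decode (i : 'I_5) : gkind :=
  match val i with 0 => KA | 1 => KAt | 2 => KB1 | 3 => KB2 | _ => KB3 end.
Lemma gkind_codeK : cancel gkind_code gkind_decode.
Proof. by case; rewrite /gkind_decode /= inordK. Qed.
HB.instance Definition _ := Finite.copy gkind (can_type gkind_codeK).

Definition gvalid (n : nat) (x : gkind * 'I_(2 * n)) : bool :=
  let s := nat_of_ord x.2 in
  match x.1 with
  | KA  => (1 <= s <= 2 * n - 1)%N
  | KAt => (1 <= s <= n - 2)%N || (n + 1 <= s <= 2 * n - 2)%N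
  | KB1 => (1 <= s <= n - 2)%N
  | KB2 => (1 <= s <= 2 * n - 2)%N
  | KB3 => (n + 1 <= s <= 2 * n - 2)%N
  end.

Definition gen (n : nat) : finType := {x : gkind * 'I_(2 * n) | gvalid n x}.

Definition Cn (n : nat) : lmodType R := {ffun gen n -> R^o}.

(** the basis vector with label (k, s) (zero if (k, s) is not a label) *)
Definition gvec (n : nat) (k : gkind) (s : nat) : Cn n :=
  [ffun h : gen n => (((val h).1 == k) && (nat_of_ord (val h).2 == s))%:R].

Definition alphaS n s := gvec n KA s.
Definition alphaT n s := gvec n KAt s.

Definition mono (a b : nat) : R := Uv ^+ a * Vv ^+ b.

Definition T2 (n : nat) : nat := (n * (n - 1)) %/ 2.
Definition T2' (n : nat) : nat := (n * (n + 1)) %/ 2.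

Definition dgen (n : nat) (g : gen n) : Cn n :=
  let s := nat_of_ord (val g).2 in
  match (val g).1 with
  | KA | KAt => 0
  | KB1 => mono (T2 n) (T2 n) *: alphaS n s + mono 0 (n - s - 1) *: alphaT n s
  | KB2 =>
      if (s <= n - 2)%N then
        mono (T2' n - s) (T2' n) *: alphaS n s.+1 + mono n 0 *: alphaT n s
      else if (s <= n)%N then
        mono (T2' n) (T2 n - n + s + 1) *: alphaS n s
          + mono (T2' n - s) (T2' n) *: alphaS n s.+1
      else
        mono (T2' n) (T2 n - n + s + 1) *: alphaS n s + mono 0 n *: alphaT n s
  | KB3 => mono (T2 n) (T2 n) *: alphaS n s.+1 + mono (s - n) 0 *: alphaT n s
  end.

Definition dC (n : nat) (c : Cn n) : Cn n := \sum_(g : gen n) c g *: dgen n g.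

(** x is a boundary in C_n^* (x)_R F[U]/(U^(n-1)), V acting as 1:
    x - dC y lies in (V - 1, U^(n-1)) C_n^*. *)
Definition bnd_trunc (n : nat) (x : Cn n) : Prop :=
  exists y z w : Cn n, x = dC n y + (Vv - 1) *: z + Uv ^+ (n - 1) *: w.

(* Main.v *)
Require Import Defs.
From HB Require Import structures.
From mathcomp Require Import all_boot all_order all_algebra.
From mathcomp Require Import zify.
Import GRing.Theory.
Local Open Scope ring_scope.

Lemma twoF : (2%:R : {poly 'F_2}) = 0.
Proof. by rewrite -polyC_natr; apply/eqP; rewrite polyC_eq0. Qed.

Lemma T2p_ge n : (n - 1 <= T2' n)%N.
Proof. rewrite /T2' leq_divRL //; nia. Qed.

Lemma dC_gen n (g0 : gen n) :
  dC n (gvec n (val g0).1 (val g0).2) = dgen n g0.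
Proof.
rewrite /dC (bigD1 g0) //= big1 ?addr0.
  by rewrite ffunE !eqxx /= scale1r.
move=> g ng; rewrite ffunE.
case: eqP => [e1|]; last by rewrite /= scale0r.
case: eqP => [e2|]; last by rewrite /= scale0r.
exfalso; move/eqP: ng; apply; apply: val_inj.
rewrite [val g]surjective_pairing [val g0]surjective_pairing e1.
by congr pair; apply: val_inj.
Qed.

Lemma dC_alpha n s : dC n (alphaS n s) = 0.
Proof.
rewrite /dC big1 // => g _; rewrite ffunE.
case: eqP => [e1|]; last by rewrite /= scale0r.
by rewrite /dgen e1 scaler0.
Qed.

Section Bnd.
Variables (D : lmodType R) (dD : {linear D -> D}).
Local Notation bnd := (bndV1 D dD).

Lemma bnd_add x y : bnd x -> bnd y -> bnd (x + y).
Proof.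
move=> [y1 [z1 ->]] [y2 [z2 ->]]; exists (y1 + y2), (z1 + z2).
by rewrite linearD scalerDr addrACA.
Qed.

Lemma bnd_opp x : bnd x -> bnd (- x).
Proof.
move=> [y1 [z1 ->]]; exists (- y1), (- z1).
by rewrite linearN scalerN opprD.
Qed.

Lemma bnd_sub x y : bnd x -> bnd y -> bnd (x - y).
Proof. by move=> hx hy; apply: bnd_add => //; apply: bnd_opp. Qed.

Lemma bnd_scale r x : bnd x -> bnd (r *: x).
Proof.
move=> [y1 [z1 ->]]; exists (r *: y1), (r *: z1).
by rewrite linearZ scalerDr !scalerA mulrC.
Qed.

Lemma bnd_d y : bnd (dD y).
Proof. by exists y, 0; rewrite scaler0 addr0. Qed.

Lemma bnd_V1 (c : R) v : c.[1] = 0 -> bnd (c *: v).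
Proof.
move=> /eqP hc; have /factor_theorem [q ->] : root c 1 by [].
exists 0, (q *: v); rewrite linear0 add0r scalerA mulrC /Vv.
by rewrite polyC1.
Qed.

Lemma bnd_cancel (k : nat) x : S3_knotlike D dD -> cycV1 D dD x ->
  bnd (Uv ^+ k *: x) -> bnd x.
Proof.
move=> [phi [hc hl hinj hsurj]] cx hkx.
have [p hp] := hsurj x cx.
have h0 : bnd (phi 0).
  have := hl 1 0 0; rewrite mulr0 addr0 scale1r opprD addrA subrr add0r.
  by move/bnd_opp; rewrite opprK.
have hk := hl (Uv ^+ k) p 0.
have eU : setV1 (Uv ^+ k) = 'X^k by rewrite /setV1 /Uv -rmorphXn hornerC.
rewrite eU addr0 in hk.
have hq : bnd (phi ('X^k * p)).
  have -> : phi ('X^k * p) = (phi ('X^k * p) - (Uv ^+ k *: phi p + phi 0))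
     + (Uv ^+ k *: (phi p - x)) + Uv ^+ k *: x + phi 0.
    by rewrite scalerBr addrA subrK opprD addrA addrAC subrK subrK.
  apply: bnd_add => //; apply: bnd_add => //; apply: bnd_add => //.
  by apply: bnd_scale; rewrite -opprB; apply: bnd_opp.
have /eqP := hinj _ hq; rewrite mulf_eq0 expf_eq0 polyX_eq0 andbF /= => /eqP p0.
move: hp; rewrite p0 => hp.
by have := bnd_add _ _ hp h0; rewrite subrK.
Qed.
End Bnd.

Lemma zmod_id (V : zmodType) (a b p q : V) : a - b = (p + q) - (p + b) - (q - a).
Proof. by rewrite (addrC p) addrKA opprB [RHS]addrC addrA subrK. Qed.

Theorem lemma2p11 (n : nat) (hn : (3 <= n)%N)
  (D : lmodType R) (dD : {linear D -> D})
  (hdD : forall x : D, dD (dD x) = 0)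
  (hknot : S3_knotlike D dD)
  (f : {linear Cn n -> D}) (g : {linear D -> Cn n})
  (hf : forall c : Cn n, f (dC n c) = dD (f c))
  (hg : forall x : D, g (dD x) = dC n (g x)) :
  bnd_trunc n (g (f (alphaS n n))).
Proof.
set a1 := f (alphaS n (n - 1)); set an := f (alphaS n n).
set x := an - Uv ^+ (n - 1) *: a1.
have cx : cycV1 D dD x.
  exists 0; rewrite scaler0 /x linearB linearZ /a1 /an -!hf !dC_alpha !linear0.
  by rewrite -[X in _ - X]/(GRing.scale _ _) scaler0 subrr.
set k := (T2' n - (n - 1))%N.
have hlt : (n - 1 < 2 * n)%N by lia.
have hv : gvalid n (KB2, Ordinal hlt) by rewrite /gvalid /=; lia.
pose g0 : gen n := exist _ (KB2, Ordinal hlt) hv.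
set j := (T2 n - n + (n - 1) + 1)%N.
have hd : dgen n g0 = mono (T2' n) j *: alphaS n (n - 1) + mono k (T2' n) *: alphaS n n.
  rewrite /dgen /=.
  have -> : (n - 1 <= n - 2)%N = false by lia.
  have -> : (n - 1 <= n)%N = true by lia.
  by have -> : (n - 1).+1 = n by lia.
have hF : bndV1 D dD (mono (T2' n) j *: a1 + mono k (T2' n) *: an).
  have := bnd_d D dD (f (gvec n KB2 (n - 1))).
  by rewrite -hf (dC_gen n g0) hd linearD !linearZ.
have eT : (k + (n - 1))%N = T2' n by have := T2p_ge n; lia.
have hkx : bndV1 D dD (Uv ^+ k *: x).
  rewrite /x scalerBr scalerA -exprD eT.
  rewrite (zmod_id _ _ _ (mono (T2' n) j *: a1) (mono k (T2' n) *: an)).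
  apply: bnd_sub; [apply: bnd_sub => //|].
    rewrite -scalerDl; apply: bnd_V1.
    rewrite /mono /Uv /Vv hornerD hornerM -!rmorphXn !hornerC hornerXn expr1n mulr1.
    by rewrite -mulr2n -mulr_natr twoF mulr0.
  rewrite -scalerBl; apply: bnd_V1.
  rewrite /mono /Uv /Vv hornerD hornerN hornerM -!rmorphXn !hornerC hornerXn expr1n mulr1.
  by rewrite subrr.
have [y [z hx]] := bnd_cancel D dD k x hknot cx hkx.
exists (g y), (g z), (g a1).
have -> : an = x + Uv ^+ (n - 1) *: a1 by rewrite /x subrK.
by rewrite hx !linearD !linearZ hg.
Qed.
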